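(* Let $\beta,\gamma,\mu>0$, $0<p<1$, and $\delta=\beta/(\gamma+\mu)$. Consider the temporary adoption model $$S_0'=\mu-\beta S_0A-\mu S_0,\quad S_1'=(1-p)\beta S_0A-\beta S_1A-\mu S_1,\quad A'=\beta(pS_0+S_1)A-(\gamma+\mu)A,\quad R'=\gamma A-\mu R$$ on $\{S_0,S_1,A,R\ge0,\ S_0+S_1+A+R=1\}$. Its equilibria are the contagion-free equilibrium $E_0=(S_0,S_1,A,R)=(1,0,0,0)$ and points with $A\in\{A_1,A_2\}$, where $$A_{1,2}=\tfrac12\Big(1+\tfrac{\gamma}{\mu}\Big)^{-1}\Big[1-2\delta^{-1}\pm\sqrt{1-4(1-p)\delta^{-1}}\Big],$$ and $$S_0=\frac{1}{\delta(\frac{\gamma}{\mu}+1)A+1},\qquad S_1=(1-p)\frac{\delta(\frac{\gamma}{\mu}+1)A}{(\delta(\frac{\gamma}{\mu}+1)A+1)^2},\qquad R=\frac{\gamma}{\mu}A.$$ Call $E_i$ ($i=1,2$) the equilibrium with $A=A_i$ when $A_i$ is real and positive (an endemic equilibrium). Then: (I) If $p<\tfrac12$: for $\delta<4(1-p)$ there are no endemic equilibria; for $4(1-p)\le\delta<\tfrac1p$ there are two endemic equilibria $E_1,E_2$, which coincide when $\delta=4(1-p)$; for $\delta\ge\tfrac1p$ there is a unique endemic equilibrium $E_1$. (II) If $p\ge\tfrac12$: for $\delta\le\tfrac1p$ there is no endemic equilibrium; for $\delta>\tfrac1p$ there is a unique endemic equilibrium $E_1$.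
   Context: $S_0,S_1,A,R$ are the fractions of naive, informed, adopter and removed (former adopter, who never re-adopts) individuals; $\beta$ is the effective contact rate, $\mu$ the per capita demographic turnover rate, $\gamma$ the per capita rate of abandoning adoption, $p$ the probability of adoption on first effective contact with an adopter. $\delta=\beta/(\gamma+\mu)$ is the contact parameter. An endemic equilibrium is an equilibrium with $A>0$ and all components non-negative. *)

(* Defs.v *)
From Stdlib Require Import Reals.
Open Scope R_scope.

Definition delta (beta gamma mu : R) : R := beta / (gamma + mu).

Definition rhs_S0 (beta gamma mu p S0 S1 A Rm : R) : R := mu - beta * S0 * A - mu * S0.
Definition rhs_S1 (beta gamma mu p S0 S1 A Rm : R) : R :=
  (1 - p) * beta * S0 * A - beta * S1 * A - mu * S1.
Definition rhs_A (beta gamma mu p S0 S1 A Rm : R) : R :=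
  beta * (p * S0 + S1) * A - (gamma + mu) * A.
Definition rhs_R (beta gamma mu p S0 S1 A Rm : R) : R := gamma * A - mu * Rm.

Definition is_equilibrium (beta gamma mu p : R) (x : R * R * R * R) : Prop :=
  let '(S0, S1, A, Rm) := x in
  0 <= S0 /\ 0 <= S1 /\ 0 <= A /\ 0 <= Rm /\ S0 + S1 + A + Rm = 1 /\
  rhs_S0 beta gamma mu p S0 S1 A Rm = 0 /\
  rhs_S1 beta gamma mu p S0 S1 A Rm = 0 /\
  rhs_A beta gamma mu p S0 S1 A Rm = 0 /\
  rhs_R beta gamma mu p S0 S1 A Rm = 0.

Definition is_endemic (beta gamma mu p : R) (x : R * R * R * R) : Prop :=
  is_equilibrium beta gamma mu p x /\ 0 < snd (fst x).

Definition Aend1 (beta gamma mu p : R) : R :=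
  let d := delta beta gamma mu in
  / 2 * / (1 + gamma / mu) * (1 - 2 / d + sqrt (1 - 4 * (1 - p) / d)).
Definition Aend2 (beta gamma mu p : R) : R :=
  let d := delta beta gamma mu in
  / 2 * / (1 + gamma / mu) * (1 - 2 / d - sqrt (1 - 4 * (1 - p) / d)).

Definition E_of (beta gamma mu p A : R) : R * R * R * R :=
  let k := delta beta gamma mu * (gamma / mu + 1) * A in
  (1 / (k + 1), (1 - p) * k / ((k + 1) ^ 2), A, gamma / mu * A).

(* Main.v *)
Require Import Defs.
From Stdlib Require Import Reals Lra Psatz.
Open Scope R_scope.

Definition qf (d p k : R) : R := k*k + (2-d)*k + 1 - d*p.

Lemma kE b g m A : 0<b->0<g->0<m -> delta b g m * (g/m+1) * A = b*A/m.
Proof. intros. unfold delta. field. lra. Qed.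

Lemma L1 b g m p k : 0<b->0<g->0<m->0<p->p<1-> 0<k -> qf (delta b g m) p k = 0 ->
  is_endemic b g m p (E_of b g m p (m/b*k)).
Proof.
  intros hb hg hm hp0 hp1 hk hq.
  unfold is_endemic, E_of. rewrite kE by assumption.
  replace (b*(m/b*k)/m) with k by (field; lra).
  assert (H: (g+m)*(k+1)^2 - b*(k+p) = 0).
  { replace ((g+m)*(k+1)^2 - b*(k+p)) with ((g+m)*qf (delta b g m) p k)
      by (unfold qf, delta; field; lra). rewrite hq; ring. }
  assert (hk1 : 0 < k+1) by lra.
  assert (e0: rhs_S0 b g m p (1/(k+1)) ((1-p)*k/((k+1)^2)) (m/b*k) (g/m*(m/b*k)) = 0).
  { unfold rhs_S0. field. lra. }
  assert (e1: rhs_S1 b g m p (1/(k+1)) ((1-p)*k/((k+1)^2)) (m/b*k) (g/m*(m/b*k)) = 0).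
  { unfold rhs_S1. field. lra. }
  assert (e2: rhs_A b g m p (1/(k+1)) ((1-p)*k/((k+1)^2)) (m/b*k) (g/m*(m/b*k)) = 0).
  { unfold rhs_A.
    replace (b * (p * (1 / (k + 1)) + (1 - p) * k / (k + 1) ^ 2) * (m / b * k) - (g + m) * (m / b * k))
      with (- (m/b*k)/(k+1)^2 * ((g+m)*(k+1)^2 - b*(k+p))) by (field; lra).
    rewrite H; ring. }
  assert (e3: rhs_R b g m p (1/(k+1)) ((1-p)*k/((k+1)^2)) (m/b*k) (g/m*(m/b*k)) = 0).
  { unfold rhs_R. field. lra. }
  assert (es: 1/(k+1) + (1-p)*k/((k+1)^2) + m/b*k + g/m*(m/b*k) = 1).
  { revert e0 e1 e2 e3. unfold rhs_S0, rhs_S1, rhs_A, rhs_R.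
    set (S0 := 1/(k+1)). set (S1 := (1-p)*k/((k+1)^2)). set (A := m/b*k). set (Rm := g/m*(m/b*k)).
    intros. nra. }
  simpl in *. repeat split; try assumption.
  - apply Rlt_le; apply Rdiv_lt_0_compat; lra.
  - unfold Rdiv. apply Rmult_le_pos. nra. apply Rlt_le; apply Rinv_0_lt_compat; nra.
  - assert (0 < m/b) by (apply Rdiv_lt_0_compat; lra). nra.
  - assert (0 < m/b) by (apply Rdiv_lt_0_compat; lra).
    assert (0 < g/m) by (apply Rdiv_lt_0_compat; lra).
    apply Rlt_le; apply Rmult_lt_0_compat; [lra| apply Rmult_lt_0_compat; lra].
  - assert (0 < m/b) by (apply Rdiv_lt_0_compat; lra). nra.
Qed.

Lemma L2 b g m p x : 0<b->0<g->0<m->0<p->p<1-> is_endemic b g m p x ->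
  exists k, 0<k /\ qf (delta b g m) p k = 0 /\ x = E_of b g m p (m/b*k).
Proof.
  intros hb hg hm hp0 hp1. destruct x as [[[S0 S1] A] Rm].
  unfold is_endemic, is_equilibrium, rhs_S0, rhs_S1, rhs_A, rhs_R. simpl.
  intros [[h0 [h1 [h2 [h3 [hs [e0 [e1 [e2 e3]]]]]]]] hA].
  exists (b*A/m). unfold E_of. rewrite kE by assumption.
  set (k := b*A/m).
  assert (hk: 0 < k) by (unfold k; apply Rdiv_lt_0_compat; nra).
  assert (HA: A = m/b*k) by (unfold k; field; lra).
  clearbody k. subst A.
  assert (HS0: S0 = 1/(k+1)).
  { apply (Rmult_eq_reg_r (m*(k+1))). 2: nra.
    replace (1/(k+1)*(m*(k+1))) with m by (field; lra).
    replace (b*S0*(m/b*k)) with (S0*m*k) in e0 by (field; lra). nra. }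
  subst S0.
  assert (HS1: S1 = (1-p)*k/((k+1)^2)).
  { apply (Rmult_eq_reg_r (m*(k+1))). 2: nra.
    replace ((1-p)*k/((k+1)^2)*(m*(k+1))) with ((1-p)*m*k/(k+1)) by (field; lra).
    replace ((1 - p) * b * (1 / (k + 1)) * (m / b * k)) with ((1-p)*m*k/(k+1)) in e1 by (field; lra).
    replace (b*S1*(m/b*k)) with (S1*m*k) in e1 by (field; lra).
    set (t := (1-p)*m*k/(k+1)) in *. nra. }
  subst S1.
  assert (HR: Rm = g/m*(m/b*k)).
  { apply (Rmult_eq_reg_r m). 2: lra. replace (g/m*(m/b*k)*m) with (g*(m/b*k)) by (field; lra). lra. }
  subst Rm.
  replace (b*(m/b*k)/m) with k by (field; lra).
  split; [exact hk|split; [|reflexivity]].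
  assert (e2': b * (p * (1 / (k + 1)) + (1 - p) * k / (k + 1) ^ 2) - (g + m) = 0).
  { assert (0 < m/b*k) by (assert (0<m/b) by (apply Rdiv_lt_0_compat; lra); nra).
    apply (Rmult_eq_reg_r (m/b*k)). 2: lra.
    transitivity (b * (p * (1 / (k + 1)) + (1 - p) * k / (k + 1) ^ 2) * (m / b * k) -
  (g + m) * (m / b * k)). ring. rewrite e2; ring. }
  replace (qf (delta b g m) p k) with
    (- (k+1)^2/(g+m) * (b * (p * (1 / (k + 1)) + (1 - p) * k / (k + 1) ^ 2) - (g + m)))
    by (unfold qf, delta; field; lra).
  rewrite e2'. ring.
Qed.
Lemma sfacts d p : 0<d -> 4*(1-p) <= d ->
  0 <= sqrt (1-4*(1-p)/d) /\ d*d*(sqrt (1-4*(1-p)/d) * sqrt (1-4*(1-p)/d)) = d*d - 4*(1-p)*d.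
Proof.
  intros hd h. assert (hD: 0 <= 1 - 4*(1-p)/d).
  { replace (1 - 4*(1-p)/d) with ((d-4*(1-p))*/d) by (field; lra).
    apply Rmult_le_pos. lra. apply Rlt_le, Rinv_0_lt_compat; lra. }
  split. apply sqrt_pos. rewrite sqrt_sqrt by exact hD. field. lra.
Qed.

Lemma qfact d p s k : d*d*(s*s) = d*d - 4*(1-p)*d ->
  qf d p k = (k - (d-2+d*s)/2)*(k - (d-2-d*s)/2).
Proof. intros h. unfold qf. nra. Qed.

Lemma roots d p s k : d*d*(s*s) = d*d - 4*(1-p)*d ->
  (qf d p k = 0 <-> k = (d-2+d*s)/2 \/ k = (d-2-d*s)/2).
Proof.
  intros h. rewrite (qfact d p s k h). split.
  - intros H. apply Rmult_integral in H. lra.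
  - intros [H|H]; rewrite H; ring.
Qed.

Lemma divp d p : 0 < p -> (d < 1/p <-> p*d < 1) /\ (d <= 1/p <-> p*d <= 1) /\ (1/p <= d <-> 1 <= p*d)
  /\ (1/p < d <-> 1 < p*d).
Proof.
  intros hp. assert (e: p*(1/p) = 1) by (field; lra).
  repeat split; intros H.
  - rewrite <- e. apply Rmult_lt_compat_l; lra.
  - apply (Rmult_lt_reg_l p); lra.
  - rewrite <- e. apply Rmult_le_compat_l; lra.
  - apply (Rmult_le_reg_l p); lra.
  - rewrite <- e. apply Rmult_le_compat_l; lra.
  - apply (Rmult_le_reg_l p); lra.
  - rewrite <- e. apply Rmult_lt_compat_l; lra.
  - apply (Rmult_lt_reg_l p); lra.
Qed.

Lemma aE b g m p : 0<b->0<g->0<m ->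
  Aend1 b g m p = m/b*((delta b g m - 2 + delta b g m * sqrt (1-4*(1-p)/delta b g m))/2) /\
  Aend2 b g m p = m/b*((delta b g m - 2 - delta b g m * sqrt (1-4*(1-p)/delta b g m))/2).
Proof.
  intros hb hg hm. unfold Aend1, Aend2.
  set (s := sqrt _). unfold delta. split; field; repeat split; try lra.
  all: try (intro; assert (g+m = 0) by (apply (Rmult_eq_reg_r (/m)); [|apply Rinv_neq_0_compat]; lra); lra).
Qed.

Theorem mainTheorem4 (beta gamma mu p : R)
  (Hbeta : 0 < beta) (Hgamma : 0 < gamma) (Hmu : 0 < mu)
  (Hp0 : 0 < p) (Hp1 : p < 1) :
  let d := delta beta gamma mu in
  let a1 := Aend1 beta gamma mu p in
  let a2 := Aend2 beta gamma mu p in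
  let E1 := E_of beta gamma mu p a1 in
  let E2 := E_of beta gamma mu p a2 in
  (* (I) *)
  (p < 1 / 2 ->
     (d < 4 * (1 - p) -> forall x, ~ is_endemic beta gamma mu p x) /\
     (4 * (1 - p) <= d < 1 / p ->
        0 < a1 /\ 0 < a2 /\
        is_endemic beta gamma mu p E1 /\ is_endemic beta gamma mu p E2 /\
        (forall x, is_endemic beta gamma mu p x <-> x = E1 \/ x = E2) /\
        (E1 = E2 <-> d = 4 * (1 - p))) /\
     (1 / p <= d ->
        0 < a1 /\ is_endemic beta gamma mu p E1 /\
        (forall x, is_endemic beta gamma mu p x <-> x = E1))) /\
  (* (II) *)
  (1 / 2 <= p ->
     (d <= 1 / p -> forall x, ~ is_endemic beta gamma mu p x) /\
     (1 / p < d ->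
        0 < a1 /\ is_endemic beta gamma mu p E1 /\
        (forall x, is_endemic beta gamma mu p x <-> x = E1))).
Proof.
  intros d a1 a2 E1 E2.
  assert (hd: 0 < d) by (unfold d, delta; apply Rdiv_lt_0_compat; lra).
  destruct (aE beta gamma mu p Hbeta Hgamma Hmu) as [ha1 ha2].
  fold d in ha1, ha2. fold a1 in ha1. fold a2 in ha2.
  set (s := sqrt (1 - 4 * (1 - p) / d)) in *.
  set (k1 := (d - 2 + d * s) / 2) in *.
  set (k2 := (d - 2 - d * s) / 2) in *.
  assert (mb: 0 < mu/beta) by (apply Rdiv_lt_0_compat; lra).
  assert (char: forall x, is_endemic beta gamma mu p x <->
            exists k, 0<k /\ qf d p k = 0 /\ x = E_of beta gamma mu p (mu/beta*k)).
  { intros x; split. apply L2; assumption.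
    intros [k [hk [hq ->]]]. apply L1; assumption. }
  assert (nor: (forall k, 0 < k -> qf d p k <> 0) -> forall x, ~ is_endemic beta gamma mu p x).
  { intros H x hx. apply char in hx. destruct hx as [k [hk [hq _]]]. exact (H k hk hq). }
  destruct (divp d p Hp0) as [q1 [q2 [q3 q4]]].
  assert (disc_neg: d < 4*(1-p) -> forall k, qf d p k <> 0).
  { intros H k. unfold qf. intro e.
    pose proof (Rle_0_sqr (2*k+2-d)) as hsq. unfold Rsqr in hsq.
    assert (0 < d*(4*(1-p)-d)) by (apply Rmult_lt_0_compat; lra). nra. }
  assert (sf: 4*(1-p) <= d -> 0 <= s /\ d*d*(s*s) = d*d - 4*(1-p)*d).
  { intros H. apply sfacts; assumption. }
  assert (endE1: 0 < k1 -> 4*(1-p) <= d -> is_endemic beta gamma mu p E1).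
  { intros hk H. destruct (sf H) as [_ h]. unfold E1. rewrite ha1. apply L1; try assumption.
    apply (roots d p s k1 h). left; reflexivity. }
  assert (endE2: 0 < k2 -> 4*(1-p) <= d -> is_endemic beta gamma mu p E2).
  { intros hk H. destruct (sf H) as [_ h]. unfold E2. rewrite ha2. apply L1; try assumption.
    apply (roots d p s k2 h). right; reflexivity. }
  assert (onlyroots: 4*(1-p) <= d -> forall x, is_endemic beta gamma mu p x ->
            (0 < k1 /\ x = E1) \/ (0 < k2 /\ x = E2)).
  { intros H x hx. destruct (sf H) as [_ h]. apply char in hx.
    destruct hx as [k [hk [hq ->]]]. apply (roots d p s k h) in hq.
    destruct hq as [-> | ->]; [left|right]; split; try assumption.
    unfold E1; rewrite ha1; reflexivity. unfold E2; rewrite ha2; reflexivity. }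
  split.
  - intros hp. split; [|split].
    + intros H. apply nor. intros k _. apply disc_neg; exact H.
    + intros [H H']. apply q1 in H'. destruct (sf H) as [hs h].
      assert (hk2: 0 < k2).
      { unfold k2. assert (d*s < d - 2) by nra. lra. }
      assert (hds: 0 <= d*s) by (apply Rmult_le_pos; lra).
      assert (hdiff: k1 - k2 = d*s) by (unfold k1, k2; field).
      assert (hk1: 0 < k1).
      { destruct (Rle_lt_dec k1 0) as [hh|hh]; [|exact hh]. exfalso.
        assert (0 <= k1*k2) by nra. lra. }
      split. rewrite ha1; nra. split. rewrite ha2; nra.
      split. apply endE1; assumption. split. apply endE2; assumption.
      split.
      * intros x; split.
        -- intros hx. destruct (onlyroots H x hx) as [[_ ->]|[_ ->]]; auto.
        -- intros [->| ->]; [apply endE1|apply endE2]; assumption.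
      * split.
        -- intros e. assert (ea: a1 = a2) by (apply (f_equal (fun x => snd (fst x))) in e; exact e).
           rewrite ha1, ha2 in ea.
           assert (ek: k1 = k2) by (apply (Rmult_eq_reg_l (mu/beta)); lra).
           assert (eds: d*s = 0) by (unfold k1, k2 in ek; lra).
           assert (es: s = 0) by (apply (Rmult_eq_reg_l d); lra).
           rewrite es in h. nra.
        -- intros e.
           assert (es: s = 0). { unfold s. replace (1 - 4*(1-p)/d) with 0. apply sqrt_0.
             rewrite e. field. lra. }
           assert (ea: a1 = a2) by (rewrite ha1, ha2; unfold k1, k2; rewrite es; rewrite !Rmult_0_r, !Rplus_0_r, Rminus_0_r; reflexivity).
           unfold E1, E2. rewrite ea. reflexivity.
    + intros H. apply q3 in H.
      assert (H4: 4*(1-p) <= d).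
      { pose proof (Rle_0_sqr (2*p-1)) as hsq. unfold Rsqr in hsq.
        apply (Rmult_le_reg_l p); [lra|]. nra. }
      destruct (sf H4) as [hs h].
      assert (d > 2) by (apply (Rmult_lt_reg_l p); lra).
      assert (hds: 0 <= d*s) by (apply Rmult_le_pos; lra).
      assert (hk2: k2 <= 0).
      { unfold k2. destruct (Rle_lt_dec (d-2) (d*s)) as [hh|hh]. lra.
        exfalso. assert ((d*s)*(d*s) < (d-2)*(d-2)) by nra. nra. }
      assert (hk1: 0 < k1) by (unfold k1; nra).
      split. rewrite ha1; nra. split. apply endE1; assumption.
      intros x; split.
      * intros hx. destruct (onlyroots H4 x hx) as [[_ ->]|[hh _]]; [reflexivity|lra].
      * intros ->. apply endE1; assumption.
  - intros hp. split.
    + intros H. apply q2 in H. apply nor. intros k hk. unfold qf.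
      assert (d <= 2) by (apply (Rmult_le_reg_l p); lra).
      assert (0 <= (2-d)*k) by (apply Rmult_le_pos; lra). intro e. nra.
    + intros H. apply q4 in H.
      assert (H4: 4*(1-p) <= d).
      { pose proof (Rle_0_sqr (2*p-1)) as hsq. unfold Rsqr in hsq.
        apply (Rmult_le_reg_l p); [lra|]. nra. }
      destruct (sf H4) as [hs h].
      assert (hkk: k1*k2 < 0).
      { replace (k1*k2) with (((d-2)*(d-2) - d*d*(s*s))/4) by (unfold k1, k2; field).
        rewrite h. nra. }
      assert (hds: 0 <= d*s) by (apply Rmult_le_pos; lra).
      assert (hdiff: k1 - k2 = d*s) by (unfold k1, k2; field).
      assert (hk1: 0 < k1).
      { destruct (Rle_lt_dec k1 0) as [hh|hh]; [|exact hh]. exfalso.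
        assert (0 <= k1*k2) by nra. lra. }
      assert (hk2: k2 < 0) by nra.
      split. rewrite ha1; nra. split. apply endE1; assumption.
      intros x; split.
      * intros hx. destruct (onlyroots H4 x hx) as [[_ ->]|[hh _]]; [reflexivity|lra].
      * intros ->. apply endE1; assumption.
Qed.
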